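(* Let $E_8$ denote the complex simple simply-connected Lie group of type $E_8$, with Lie algebra $\mathfrak{e}_8$, simple roots $\alpha_1,\dots,\alpha_8$, fundamental weights $\omega_1,\dots,\omega_8$, and fundamental characters $\chi_1,\dots,\chi_8$ ($\chi_l$ the character of the irreducible representation with highest weight $\omega_l$). For each $k$ with $0\le k\le 248$, let $N^{(k)}_\iota\in\mathbb{Z}$, $\iota\in\mathbb{Z}_{\ge 0}^8$, be the unique integers (finitely many nonzero) such that $$\chi_{\wedge^k \mathfrak{e}_8}=\sum_{\iota\in\mathbb{Z}_{\ge0}^8} N^{(k)}_\iota \prod_{l=1}^8 \chi_l^{\iota_l}$$ in the representation ring $\mathrm{Rep}(E_8)\cong\mathbb{Z}[\chi_1,\dots,\chi_8]$, where $\wedge^k\mathfrak{e}_8$ is the $k$-th exterior power of the adjoint representation. Let $e_{jk}$ denote the coefficient of $\alpha_k$ in the expansion of $\omega_j$ in the basis of simple roots (i.e. $e_{jk}=(C^{-1})_{jk}$, with $C$ the Cartan matrix of $E_8$), and define the set of admissible exponents $$\mathfrak{I}=\Big\{\iota\in\mathbb{Z}_{\ge0}^8 \;\Big|\; \sum_{j=1}^8 \iota_j e_{jk}\le 2\sum_{j=1}^8 e_{jk}\ \text{ for all } k=1,\dots,8\Big\}.$$ Then for every $\iota\in\mathbb{Z}_{\ge0}^8$ with $\iota\notin\mathfrak{I}$, one has $N^{(k)}_\iota=0$ for all $k$.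
   Context: The representation ring $\mathrm{Rep}(E_8)$ (equivalently the ring of Weyl-invariant regular functions on the maximal torus, via characters) is the polynomial ring over $\mathbb{Z}$ in the fundamental characters $\chi_1,\dots,\chi_8$, so the coefficients $N^{(k)}_\iota$ are well defined. The labelling of simple roots, fundamental weights and fundamental characters is any fixed one, used consistently (fundamental weight $\omega_j$ dual to the simple coroot of $\alpha_j$). Note that $2\sum_j e_{jk}$ is the $\alpha_k$-coefficient of $2\rho=2\sum_j\omega_j$, so $\iota\in\mathfrak{I}$ means that $2\rho-\sum_j\iota_j\omega_j$ has nonnegative coefficients in the simple-root basis. *)

(* Defs.v *)
From HB Require Import structures.
From mathcomp Require Import all_boot all_order all_algebra.
Set Implicit Arguments. Unset Strict Implicit. Unset Printing Implicit Defensive.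
Import Order.TTheory GRing.Theory Num.Theory.
Local Open Scope ring_scope.

(** Labelling of the E8 Dynkin diagram (Bourbaki, 0-indexed):
    chain 0-2-3-4-5-6-7 and node 1 attached to node 3. *)
Definition adjE8 (i j : nat) : bool :=
  let e a b := ((i == a) && (j == b)) || ((i == b) && (j == a)) in
  [|| e 0 2, e 2 3, e 3 4, e 4 5, e 5 6, e 6 7 | e 1 3]%N.

Definition CartanE8 : 'M[int]_8 :=
  \matrix_(i < 8, j < 8)
    (if i == j then (2 : int) else if adjE8 i j then (-1 : int) else (0 : int)).

(** Weight lattice P, in coordinates w.r.t. the fundamental weights
    omega_1..omega_8 (for E8 the weight lattice equals the root lattice). *)
Definition wt := 'rV[int]_8.

Definition omega (l : 'I_8) : wt := \row_(j < 8) (if j == l then (1 : int) else (0 : int)).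
Definition rho : wt := \row_(j < 8) (1 : int).

Definition salpha (i : 'I_8) : wt := row i CartanE8.

Definition refl (i : 'I_8) (mu : wt) : wt := mu - (mu 0 i) *: salpha i.

Definition strictly_dominant (mu : wt) : bool := [forall j, 0 < mu 0 j].

(** Roots of E8: elements of the root lattice of squared length 2, where
    beta = c *m C (c = coordinates in the simple-root basis) and
    (beta, beta) = c C c^T. *)
Definition is_root (beta : wt) : Prop :=
  exists c : 'rV[int]_8, beta = c *m CartanE8 /\ (c *m CartanE8 *m c^T) 0 0 = 2.

(** The group ring Z[P]: formal finite Z-linear combinations of e^mu,
    represented by lists of (weight, coefficient); two such are equal in
    Z[P] iff their coefficient functions agree. *)
Definition elt := seq (wt * int).
Definition coef (f : elt) (mu : wt) : int := \sum_(p <- f | p.1 == mu) p.2.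
Definition eeq (f g : elt) : Prop := forall mu, coef f mu = coef g mu.
Definition eexp (mu : wt) : elt := [:: (mu, 1)].
Definition eone : elt := eexp 0.
Definition eadd (f g : elt) : elt := f ++ g.
Definition escale (c : int) (f : elt) : elt := [seq (p.1, c * p.2) | p <- f].
Definition emul (f g : elt) : elt := [seq (p.1 + q.1, p.2 * q.2) | p <- f, q <- g].
Definition epow (f : elt) (n : nat) : elt := iter n (emul f) eone.

(** W-alternating sums A_mu = sum_{w in W} sgn(w) e^{w mu}, for mu strictly
    dominant: the unique W-anti-invariant element whose restriction to the
    strictly dominant weights is e^mu. *)
Definition alt_sum (mu : wt) (f : elt) : Prop :=
  [/\ (forall (i : 'I_8) (nu : wt), coef f (refl i nu) = - coef f nu),
      coef f mu = 1 &
      (forall nu : wt, strictly_dominant nu -> nu != mu -> coef f nu = 0)].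

(** chi is the character of the irreducible representation of highest
    weight lambda (Weyl character formula: chi * A_rho = A_{lambda+rho}). *)
Definition irr_char (lambda : wt) (chi : elt) : Prop :=
  exists a b : elt, [/\ alt_sum rho a, alt_sum (lambda + rho) b & eeq (emul chi a) b].

(** Elementary symmetric function e_k(e^{w_1},...,e^{w_n}): the character of
    the k-th exterior power of a representation with weights w_1..w_n
    (listed with multiplicity). *)
Fixpoint elemsym (k : nat) (ws : seq wt) : elt :=
  match k, ws with
  | 0%N, _ => eone
  | k'.+1, [::] => [::]
  | k'.+1, w :: ws' => eadd (elemsym k ws') (emul (eexp w) (elemsym k' ws'))
  end.

Definition adjoint_weights (rts : seq wt) : seq wt := rts ++ nseq 8 0.

Definition expo := {ffun 'I_8 -> nat}.

Definition emonom (chi : 'I_8 -> elt) (iota : expo) : elt :=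
  foldr emul eone [seq epow (chi l) (iota l) | l <- enum 'I_8].

Definition expand (chi : 'I_8 -> elt) (S : seq expo) (N : expo -> int) : elt :=
  flatten [seq escale (N iota) (emonom chi iota) | iota <- S].

Definition CinvE8 : 'M[rat]_8 := invmx (map_mx (fun z : int => z%:~R) CartanE8).
Definition e_coef (j k : 'I_8) : rat := CinvE8 j k.

Definition admissible (iota : expo) : Prop :=
  forall k : 'I_8,
    \sum_(j < 8) (iota j)%:R * e_coef j k <= 2 * \sum_(j < 8) e_coef j k.

(* Main.v *)
Require Import Defs.
From HB Require Import structures.
From mathcomp Require Import all_boot all_order all_algebra.
From mathcomp Require Import ring lra zify.
Set Implicit Arguments. Unset Strict Implicit. Unset Printing Implicit Defensive.
Import Order.TTheory GRing.Theory Num.Theory.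
Local Open Scope ring_scope.

Lemma coef_cat f g mu : coef (f ++ g) mu = coef f mu + coef g mu.
Proof. by rewrite /coef big_cat. Qed.

Lemma coef_cons p f mu : coef (p :: f) mu = (if p.1 == mu then p.2 else 0) + coef f mu.
Proof. by rewrite /coef big_cons; case: ifP => _; rewrite ?add0r. Qed.

Lemma coef_nil mu : coef [::] mu = 0.
Proof. by rewrite /coef big_nil. Qed.

Lemma coef_escale c f mu : coef (escale c f) mu = c * coef f mu.
Proof. by rewrite /coef /escale big_map big_distrr. Qed.

Lemma coef_flatten (L : seq elt) mu : coef (flatten L) mu = \sum_(f <- L) coef f mu.
Proof.
elim: L => [|f L IH]; first by rewrite big_nil coef_nil.
by rewrite /= coef_cat IH big_cons.
Qed.

Lemma coef_nz f mu : coef f mu != 0 -> mu \in map fst f.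
Proof.
elim: f => [|[w c] f IH]; first by rewrite coef_nil eqxx.
rewrite coef_cons /= in_cons [mu == w]eq_sym; case: (w == mu) => //=.
by rewrite add0r.
Qed.

Lemma coef_emul_raw f g mu : coef (emul f g) mu = \sum_(p <- f) p.2 * coef g (mu - p.1).
Proof.
elim: f => [|p f IH]; first by rewrite big_nil /emul /= coef_nil.
rewrite big_cons /emul /= coef_cat -/(emul f g) IH; congr (_ + _).
rewrite /coef big_map big_distrr /=; apply: congr_big => // q.
by rewrite -(inj_eq (addrI (- p.1))) addKr addrC.
Qed.

Lemma sum_pick (T : eqType) (U : seq T) (a : T) (v : int) : uniq U -> a \in U ->
  \sum_(x <- U) (if a == x then v else 0) = v.
Proof.
move=> uU aU; rewrite (bigD1_seq a aU uU) /= eqxx big1 ?addr0 // => x.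
by rewrite eq_sym => /negbTE ->.
Qed.

Lemma regroup f (h : wt -> int) :
  \sum_(p <- f) p.2 * h p.1 = \sum_(x <- undup (map fst f)) coef f x * h x.
Proof.
transitivity (\sum_(x <- undup (map fst f)) \sum_(p <- f) (if p.1 == x then p.2 * h p.1 else 0)).
  rewrite exchange_big /=; apply: eq_big_seq => p pf.
  by rewrite sum_pick ?undup_uniq // mem_undup map_f.
apply: eq_bigr => x _; rewrite /coef big_distrl /= [RHS]big_mkcond /=.
by apply: eq_bigr => p _; case: eqP => // ->.
Qed.

Lemma coef_emul f g mu : coef (emul f g) mu = \sum_(x <- undup (map fst f)) coef f x * coef g (mu - x).
Proof. by rewrite coef_emul_raw (regroup f (fun x => coef g (mu - x))). Qed.

Section Cone.
Variable Pos : pred wt.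
Hypothesis Pos_add : forall a b, Pos a -> Pos b -> Pos (a + b).
Hypothesis Pos0 : ~~ Pos 0.
Hypothesis Pos_tri : forall d, d != 0 -> Pos d || Pos (- d).

Definition ltw (a b : wt) := Pos (b - a).
Definition lew (a b : wt) := (a == b) || ltw a b.

Lemma ltw_trans a b c : ltw a b -> ltw b c -> ltw a c.
Proof. by rewrite /ltw => h1 h2; have := Pos_add h2 h1; rewrite addrA subrK. Qed.

Lemma ltw_irr a : ~~ ltw a a.
Proof. by rewrite /ltw subrr. Qed.

Lemma ltw_asym a b : ltw a b -> ~~ ltw b a.
Proof. by move=> h1; apply/negP => h2; have := ltw_trans h1 h2; rewrite (negbTE (ltw_irr a)). Qed.

Lemma ltw_total a b : a != b -> ltw a b || ltw b a.
Proof.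
move=> ne; rewrite /ltw; have : b - a != 0 by rewrite subr_eq0 eq_sym.
by move/Pos_tri; rewrite opprB.
Qed.

Lemma lew_refl a : lew a a.
Proof. by rewrite /lew eqxx. Qed.

Lemma lew_trans a b c : lew a b -> lew b c -> lew a c.
Proof.
rewrite /lew => /orP[/eqP->//|h1] /orP[/eqP<-|h2]; first by rewrite h1 orbT.
by rewrite (ltw_trans h1 h2) orbT.
Qed.

Lemma lew_ltw_trans a b c : lew a b -> ltw b c -> ltw a c.
Proof. by rewrite /lew => /orP[/eqP->//|h1] h2; exact: ltw_trans h1 h2. Qed.

Lemma lew_anti a b : lew a b -> lew b a -> a = b.
Proof.
rewrite /lew => /orP[/eqP->//|h1] /orP[/eqP->//|h2].
by have := ltw_asym h1; rewrite h2.
Qed.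

Lemma lew_total a b : lew a b || lew b a.
Proof.
rewrite /lew; have [->|ne] := eqVneq a b; first by [].
by case/orP: (ltw_total ne) => ->; rewrite !orbT.
Qed.

Lemma ltw_lew a b : ltw a b -> lew a b.
Proof. by rewrite /lew => ->; rewrite orbT. Qed.

Lemma lew_ltw a b : lew a b -> a != b -> ltw a b.
Proof. by rewrite /lew => /orP[/eqP->|//]; rewrite eqxx. Qed.

Lemma ltw_shift a b c : ltw (a + c) (b + c) = ltw a b.
Proof. by rewrite /ltw opprD addrACA subrr addr0. Qed.

Lemma lew_shift a b c : lew (a + c) (b + c) = lew a b.
Proof. by rewrite /lew ltw_shift (inj_eq (addIr c)). Qed.

Lemma ltw_add a b c d : ltw a b -> ltw c d -> ltw (a + c) (b + d).
Proof.
move=> h1 h2; apply: (@ltw_trans _ (b + c)); first by rewrite ltw_shift.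
by rewrite (addrC b c) (addrC b d) ltw_shift.
Qed.

Lemma lew_add a b c d : lew a b -> lew c d -> lew (a + c) (b + d).
Proof.
move=> h1 h2; apply: (@lew_trans _ (b + c)); first by rewrite lew_shift.
by rewrite (addrC b c) (addrC b d) lew_shift.
Qed.

Lemma exists_max (T : eqType) (s : seq T) (F : T -> wt) : s != [::] ->
  exists2 y, y \in s & forall x, x \in s -> lew (F x) (F y).
Proof.
elim: s => [//|a s IH] _.
case: s IH => [|b s] IH.
  by exists a; rewrite ?mem_seq1 // => x; rewrite mem_seq1 => /eqP->; apply: lew_refl.
have [y ys ymax] := IH isT.
case/orP: (lew_total (F a) (F y)) => h.
  exists y; first by rewrite in_cons ys orbT.
  by move=> x; rewrite in_cons => /orP[/eqP->//|]; apply: ymax.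
exists a; first by rewrite in_cons eqxx.
move=> x; rewrite in_cons => /orP[/eqP->|xs]; first by apply: lew_refl.
exact: lew_trans (ymax _ xs) h.
Qed.

Definition bnd (f : elt) (m : wt) := forall nu, coef f nu != 0 -> lew nu m.
Definition islead (f : elt) (m : wt) := coef f m = 1 /\ bnd f m.

Lemma lead_mul f g m n : bnd f m -> bnd g n ->
  coef (emul f g) (m + n) = coef f m * coef g n /\ bnd (emul f g) (m + n).
Proof.
move=> bf bg; split.
  rewrite coef_emul.
  have hz : forall x, x != m -> coef f x * coef g (m + n - x) = 0.
    move=> x ne; apply/eqP; apply: contraT; rewrite mulf_eq0 negb_or => /andP[h1 h2].
    have l1 := bf _ h1; have l2 := bg _ h2.
    have l3 : lew m x.
      rewrite -(lew_shift m x (n - x)); have -> : x + (n - x) = n by rewrite addrC subrK.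
      by rewrite addrA.
    by have := lew_anti l1 l3 => E; rewrite E eqxx in ne.
  case mU : (m \in undup (map fst f)).
    rewrite (bigD1_seq m) ?undup_uniq //= big1_seq ?addr0.
      by rewrite addrAC subrr add0r.
    by move=> x /andP[ne _]; apply: hz.
  have cm : coef f m = 0.
    by apply/eqP; apply: contraFT mU => /coef_nz; rewrite mem_undup.
  by rewrite cm mul0r big1_seq // => x _; have [->|ne] := eqVneq x m; [rewrite cm mul0r|apply: hz].
move=> nu; rewrite coef_emul => nz.
have [x _ ] : exists2 x, x \in undup (map fst f) & coef f x * coef g (nu - x) != 0.
  apply/hasP; apply: contraR nz => /hasPn h; rewrite big1_seq // => x /andP[_ xs].
  by apply/eqP; apply: contraNT (h x xs) => ->.
rewrite mulf_eq0 negb_or => /andP[h1 h2].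
by have := lew_add (bf _ h1) (bg _ h2); rewrite addrC subrK.
Qed.

Lemma islead_mul f g m n : islead f m -> islead g n -> islead (emul f g) (m + n).
Proof.
move=> [c1 b1] [c2 b2]; have [c b] := lead_mul b1 b2.
by split => //; rewrite c c1 c2 mulr1.
Qed.

Lemma islead_one : islead eone 0.
Proof.
rewrite /islead /eone /eexp /coef big_cons big_nil eqxx addr0; split => // nu.
rewrite /coef big_cons big_nil /=; have [E|ne] := eqVneq nu 0; first by rewrite E lew_refl.
by move=> /eqP.
Qed.

Lemma islead_pow f m n : islead f m -> islead (epow f n) (m *+ n).
Proof.
move=> h; elim: n => [|n IH]; first by rewrite mulr0n; apply: islead_one.
by rewrite /epow iterS mulrS; apply: islead_mul.
Qed.

Lemma islead_foldr (I : Type) (s : seq I) (F : I -> elt) (G : I -> wt) :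
  (forall i, islead (F i) (G i)) ->
  islead (foldr emul eone (map F s)) (\sum_(i <- s) G i).
Proof.
move=> h; elim: s => [|i s IH]; first by rewrite big_nil; apply: islead_one.
by rewrite big_cons /=; apply: islead_mul.
Qed.

Hypothesis Pos_alpha : forall (i : 'I_8) (c : int), 0 < c -> Pos (c *: salpha i).

Lemma count_lt (T : eqType) (a b : pred T) (s : seq T) :
  (forall x, a x -> b x) -> (exists2 x, x \in s & b x && ~~ a x) -> (count a s < count b s)%N.
Proof.
move=> ab; elim: s => [|y s IH] [x]; first by [].
rewrite in_cons => /orP[/eqP-> /andP[bY nay]|xs hx] /=.
  rewrite (negbTE nay) bY /= add0n add1n ltnS.
  by elim: s {IH} => //= z s IHs; apply: leq_add => //; case: (a z) (ab z) => //= ->.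
have := IH (ex_intro2 _ _ x xs hx).
case ay: (a y); first by rewrite (ab _ ay) /= !add1n ltnS.
by move=> h; apply: (leq_trans h); apply: leq_addl.
Qed.

Lemma alt_lead mu f : alt_sum mu f -> bnd f mu.
Proof.
case=> Hanti Hmu Hsd.
pose U := undup (map fst f).
pose n nu := count (fun x => ltw nu x && (coef f x != 0)) U.
suff: forall m nu, (n nu < m)%N -> coef f nu != 0 -> lew nu mu.
  by move=> h nu; apply: (h (n nu).+1).
elim=> [//|m IH] nu Hlt Hnz.
case sd : (strictly_dominant nu).
  have [->|ne] := eqVneq nu mu; first by apply: lew_refl.
  by rewrite (Hsd nu sd ne) eqxx in Hnz.
move/negbT: sd; rewrite /strictly_dominant negb_forall => /existsP[i]; rewrite -leNgt le_eqVlt.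
case/orP=> [/eqP z|neg].
  have : coef f (refl i nu) = - coef f nu by apply: Hanti.
  rewrite /refl z scale0r subr0 => /eqP; rewrite -subr_eq0 opprK -mulr2n mulrn_eq0 /=.
  by rewrite (negbTE Hnz).
have lt1 : ltw nu (refl i nu).
  rewrite /ltw /refl addrAC subrr add0r -scaleNr; apply: Pos_alpha.
  by rewrite oppr_gt0.
have nz1 : coef f (refl i nu) != 0 by rewrite Hanti oppr_eq0.
suff hl : (n (refl i nu) < m)%N by exact: lew_trans (ltw_lew lt1) (IH _ hl nz1).
rewrite -ltnS; apply: leq_trans Hlt; rewrite ltnS.
apply: count_lt.
  by move=> x /andP[h1 h2]; rewrite (ltw_trans lt1 h1) h2.
exists (refl i nu); first by rewrite /U mem_undup; exact: (coef_nz nz1).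
by rewrite lt1 nz1 /= (negbTE (ltw_irr _)).
Qed.

Lemma irr_lead lam chi : irr_char lam chi -> islead chi lam.
Proof.
case=> a [b [Ha Hb Heq]].
have ba := alt_lead Ha; have bb := alt_lead Hb.
case: Ha => _ ca _; case: Hb => _ cb _.
pose Sc := [seq x <- undup (map fst chi) | coef chi x != 0].
have inSc x : coef chi x != 0 -> x \in Sc.
  by move=> h; rewrite mem_filter h mem_undup coef_nz.
have [Sc0|ScN] := eqVneq Sc [::].
  have : coef (emul chi a) (lam + rho) = 0.
    rewrite coef_emul big1_seq // => x _.
    case: (eqVneq (coef chi x) 0) => [->|h]; first by rewrite mul0r.
    by have := inSc _ h; rewrite Sc0.
  by rewrite Heq cb.
have [m mS mmax] := exists_max id ScN.
have bc : bnd chi m by move=> nu /inSc /mmax.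
have [c1 b1] := lead_mul bc ba.
have cm : coef chi m != 0 by move: mS; rewrite mem_filter => /andP[].
have h1 : lew (m + rho) (lam + rho).
  by apply: bb; rewrite -Heq c1 ca mulr1.
have h2 : lew (lam + rho) (m + rho) by apply: b1; rewrite Heq cb.
rewrite !lew_shift in h1 h2.
have E := lew_anti h1 h2; subst m.
by split => //; rewrite -[coef chi lam]mulr1 -ca -c1 Heq cb.
Qed.

End Cone.

Definition o0 : 'I_8 := @Ordinal 8 0 isT.
Definition o1 : 'I_8 := @Ordinal 8 1 isT.
Definition o2 : 'I_8 := @Ordinal 8 2 isT.
Definition o3 : 'I_8 := @Ordinal 8 3 isT.
Definition o4 : 'I_8 := @Ordinal 8 4 isT.
Definition o5 : 'I_8 := @Ordinal 8 5 isT.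
Definition o6 : 'I_8 := @Ordinal 8 6 isT.
Definition o7 : 'I_8 := @Ordinal 8 7 isT.

Lemma sum8 (V : nmodType) (F : 'I_8 -> V) :
  \sum_(j < 8) F j = F o0 + F o1 + F o2 + F o3 + F o4 + F o5 + F o6 + F o7.
Proof.
rewrite !big_ord_recl big_ord0 addr0 !addrA.
have e : forall (a b : 'I_8), val a = val b -> F a = F b by move=> a b /val_inj ->.
rewrite (e ord0 o0) // (e (lift ord0 ord0) o1) // (e (lift ord0 (lift ord0 ord0)) o2) //.
rewrite (e (lift ord0 (lift ord0 (lift ord0 ord0))) o3) //.
rewrite (e (lift ord0 (lift ord0 (lift ord0 (lift ord0 ord0)))) o4) //.
rewrite (e (lift ord0 (lift ord0 (lift ord0 (lift ord0 (lift ord0 ord0))))) o5) //.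
rewrite (e (lift ord0 (lift ord0 (lift ord0 (lift ord0 (lift ord0 (lift ord0 ord0)))))) o6) //.
by rewrite (e (lift ord0 (lift ord0 (lift ord0 (lift ord0 (lift ord0 (lift ord0 (lift ord0 ord0))))))) o7).
Qed.

Definition Mtbl : seq (seq int) :=
 [:: [:: 4;5;7;10;8;6;4;2]; [:: 5;8;10;15;12;9;6;3]; [:: 7;10;14;20;16;12;8;4];
     [:: 10;15;20;30;24;18;12;6]; [:: 8;12;16;24;20;15;10;5]; [:: 6;9;12;18;15;12;8;4];
     [:: 4;6;8;12;10;8;6;3]; [:: 2;3;4;6;5;4;3;2]].
Definition ME8 : 'M[int]_8 := \matrix_(i < 8, j < 8) nth 0 (nth [::] Mtbl i) j.

Lemma ord8P (P : 'I_8 -> Prop) : P o0 -> P o1 -> P o2 -> P o3 -> P o4 -> P o5 -> P o6 -> P o7 -> forall i, P i.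
Proof.
move=> H0 H1 H2 H3 H4 H5 H6 H7 [m Hm].
have E : forall o : 'I_8, m = val o -> P o -> P (Ordinal Hm) by move=> o Eo; have -> : Ordinal Hm = o by apply: val_inj.
case: m Hm E => [|[|[|[|[|[|[|[|m]]]]]]]] Hm E; [exact: E H0|exact: E H1|exact: E H2|exact: E H3|exact: E H4|exact: E H5|exact: E H6|exact: E H7|by []].
Qed.

Lemma CM : CartanE8 *m ME8 = 1%:M.
Proof.
apply/matrixP => i j; rewrite !mxE sum8 !mxE.
move: i j; apply: ord8P; apply: ord8P; by [].
Qed.

Lemma MC : ME8 *m CartanE8 = 1%:M.
Proof. exact: mulmx1C CM. Qed.

Definition rc (mu : wt) : 'rV[int]_8 := mu *m ME8.

Lemma rc_inj mu : rc mu = 0 -> mu = 0.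
Proof. by rewrite /rc => h; rewrite -(mulmx1 mu) -MC mulmxA h mul0mx. Qed.

Lemma rc_salpha i : rc (salpha i) = delta_mx 0 i.
Proof. by rewrite /rc /salpha -row_mul CM row1. Qed.

Fixpoint lexpos (l : seq 'I_8) (f : 'I_8 -> int) : bool :=
  if l is j :: l' then (0 < f j) || ((f j == 0) && lexpos l' f) else false.

Lemma eq_lexpos l f g : f =1 g -> lexpos l f = lexpos l g.
Proof. by move=> e; elim: l => [//|j l IH] /=; rewrite e IH. Qed.

Lemma lexpos_add l f g : lexpos l f -> lexpos l g -> lexpos l (fun j => f j + g j).
Proof.
elim: l => [//|j l IH] /=.
case/orP=> [hf|/andP[/eqP hf0 hf]] /orP[hg|/andP[/eqP hg0 hg]].
- by rewrite addr_gt0.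
- by rewrite hg0 addr0 hf.
- by rewrite hf0 add0r hg.
- by rewrite hf0 hg0 addr0 eqxx IH // orbT.
Qed.

Lemma lexpos_zero l f : (forall j, f j = 0) -> ~~ lexpos l f.
Proof. by move=> h; elim: l => [//|j l IH] /=; rewrite h ltxx eqxx. Qed.

Lemma lexpos_tri l f : has (fun j => f j != 0) l -> lexpos l f || lexpos l (fun j => - f j).
Proof.
elim: l => [//|j l IH] /=.
have [->|ne] := eqVneq (f j) 0.
  by rewrite ltxx oppr0 eqxx /=.
move=> _; rewrite oppr_gt0; case: (ltgtP (f j) 0) ne => //.
Qed.

Lemma lexpos_nonneg l f : (forall j, 0 <= f j) -> has (fun j => 0 < f j) l -> lexpos l f.
Proof.
move=> h; elim: l => [//|j l IH] /=.
case: (ltP 0 (f j)) => //= hj hl; rewrite IH // andbT.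
by rewrite eq_le hj h.
Qed.

Definition Posk (k : 'I_8) (d : wt) : bool := lexpos (k :: enum 'I_8) (fun j => rc d 0 j).

Lemma Posk_add k a b : Posk k a -> Posk k b -> Posk k (a + b).
Proof.
move=> ha hb; have := lexpos_add ha hb.
rewrite /Posk /rc mulmxDl => h.
by rewrite (@eq_lexpos _ _ (fun j => (a *m ME8) 0 j + (b *m ME8) 0 j)) // => j; rewrite mxE.
Qed.

Lemma Posk0 k : ~~ Posk k 0.
Proof. by apply: lexpos_zero => j; rewrite /rc mul0mx mxE. Qed.

Lemma Posk_tri k d : d != 0 -> Posk k d || Posk k (- d).
Proof.
move=> nz.
have hh : has (fun j => rc d 0 j != 0) (k :: enum 'I_8).
  apply: contraR nz => /hasPn h; apply/eqP/rc_inj/matrixP => a j.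
  rewrite (ord1 a) [RHS]mxE; apply/eqP.
  by have := h j; rewrite in_cons mem_enum orbT negbK; apply.
have := lexpos_tri hh; rewrite /Posk /rc mulNmx => h.
by rewrite (@eq_lexpos _ (fun j => (- (d *m ME8)) 0 j) (fun j => - (d *m ME8) 0 j)) // => j; rewrite mxE.
Qed.

Lemma rc_scale c mu : rc (c *: mu) = c *: rc mu.
Proof. by rewrite /rc -scalemxAl. Qed.

Lemma Posk_alpha k (i : 'I_8) (c : int) : 0 < c -> Posk k (c *: salpha i).
Proof.
move=> c0; rewrite /Posk rc_scale rc_salpha; apply: lexpos_nonneg.
  by move=> j; rewrite !mxE eqxx /=; case: (j == i); rewrite ?mulr1 ?mulr0 // ltW.
apply/hasP; exists i; first by rewrite in_cons mem_enum orbT.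
by rewrite !mxE !eqxx mulr1.
Qed.

Definition P8 (x0 x1 x2 x3 x4 x5 x6 x7 : int) : int :=
  x0*x0 + x1*x1 + x2*x2 + x3*x3 + x4*x4 + x5*x5 + x6*x6 + x7*x7
  - (x0*x2 + x2*x3 + x3*x4 + x4*x5 + x5*x6 + x6*x7 + x1*x3).

Lemma P8_sos x0 x1 x2 x3 x4 x5 x6 x7 :
  120 * P8 x0 x1 x2 x3 x4 x5 x6 x7 =
  30*(2*x0 - x2)^+2 + 10*(3*x2-2*x3)^+2 + 30*(2*x1-x3)^+2 + 30*(2*x7-x6)^+2
  + 10*(3*x6-2*x5)^+2 + 5*(4*x5-3*x4)^+2 + 3*(5*x4-4*x3)^+2 + 2*x3^+2.
Proof. rewrite /P8; ring. Qed.

Lemma P8_pos x0 x1 x2 x3 x4 x5 x6 x7 :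
  [|| x0 != 0, x1 != 0, x2 != 0, x3 != 0, x4 != 0, x5 != 0, x6 != 0 | x7 != 0] ->
  1 <= P8 x0 x1 x2 x3 x4 x5 x6 x7.
Proof.
move=> nz; have := P8_sos x0 x1 x2 x3 x4 x5 x6 x7.
rewrite !expr2.
move: nz; set P := P8 _ _ _ _ _ _ _ _ => nz E.
rewrite leNgt; apply/negP => hP.
have s0 := sqr_ge0 (2*x0 - x2); have s1 := sqr_ge0 (3*x2-2*x3); have s2 := sqr_ge0 (2*x1-x3).
have s3 := sqr_ge0 (2*x7-x6); have s4 := sqr_ge0 (3*x6-2*x5); have s5 := sqr_ge0 (4*x5-3*x4).
have s6 := sqr_ge0 (5*x4-4*x3); have s7 := sqr_ge0 x3.
rewrite !expr2 in s0 s1 s2 s3 s4 s5 s6 s7.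
have h3 : x3 = 0 by nia.
subst x3.
have h4 : x4 = 0 by nia.
have h1 : x1 = 0 by nia.
have h2 : x2 = 0 by nia.
subst; have h0 : x0 = 0 by nia.
have h5 : x5 = 0 by nia.
have h6 : x6 = 0 by nia.
have h7 : x7 = 0 by nia.
by subst; move: nz; rewrite eqxx.
Qed.

Lemma P8_ge0 x0 x1 x2 x3 x4 x5 x6 x7 : 0 <= P8 x0 x1 x2 x3 x4 x5 x6 x7.
Proof.
have := P8_sos x0 x1 x2 x3 x4 x5 x6 x7.
set P := P8 _ _ _ _ _ _ _ _ => E.
have s0 := sqr_ge0 (2*x0 - x2); have s1 := sqr_ge0 (3*x2-2*x3); have s2 := sqr_ge0 (2*x1-x3).
have s3 := sqr_ge0 (2*x7-x6); have s4 := sqr_ge0 (3*x6-2*x5); have s5 := sqr_ge0 (4*x5-3*x4).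
have s6 := sqr_ge0 (5*x4-4*x3); have s7 := sqr_ge0 x3.
lia.
Qed.

Lemma P8_zero x0 x1 x2 x3 x4 x5 x6 x7 : P8 x0 x1 x2 x3 x4 x5 x6 x7 <= 0 ->
  [&& x0 == 0, x1 == 0, x2 == 0, x3 == 0, x4 == 0, x5 == 0, x6 == 0 & x7 == 0].
Proof.
move=> h; apply: contraT; rewrite !negb_and => nz.
have := P8_pos nz; lia.
Qed.

Definition pp (x : int) : int := if 0 <= x then x else 0.
Definition nn (x : int) : int := if 0 <= x then 0 else - x.
Lemma ppnn x : [/\ x = pp x - nn x, pp x * nn x = 0, 0 <= pp x & 0 <= nn x].
Proof. rewrite /pp /nn; case: ifP => h; split; lia. Qed.

Lemma pp0 x : pp x = 0 -> x <= 0.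
Proof. rewrite /pp; case: ifP => h; lia. Qed.
Lemma nn0 x : nn x = 0 -> 0 <= x.
Proof. rewrite /nn; case: ifP => h; lia. Qed.

Lemma P8_sign x0 x1 x2 x3 x4 x5 x6 x7 : P8 x0 x1 x2 x3 x4 x5 x6 x7 = 1 ->
  [&& 0 <= x0, 0 <= x1, 0 <= x2, 0 <= x3, 0 <= x4, 0 <= x5, 0 <= x6 & 0 <= x7] ||
  [&& x0 <= 0, x1 <= 0, x2 <= 0, x3 <= 0, x4 <= 0, x5 <= 0, x6 <= 0 & x7 <= 0].
Proof.
have [e0 z0 p0 n0] := ppnn x0; have [e1 z1 p1 n1] := ppnn x1.
have [e2 z2 p2 n2] := ppnn x2; have [e3 z3 p3 n3] := ppnn x3.
have [e4 z4 p4 n4] := ppnn x4; have [e5 z5 p5 n5] := ppnn x5.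
have [e6 z6 p6 n6] := ppnn x6; have [e7 z7 p7 n7] := ppnn x7.
have D : P8 x0 x1 x2 x3 x4 x5 x6 x7 =
  P8 (pp x0) (pp x1) (pp x2) (pp x3) (pp x4) (pp x5) (pp x6) (pp x7)
  + P8 (nn x0) (nn x1) (nn x2) (nn x3) (nn x4) (nn x5) (nn x6) (nn x7)
  + (pp x0 * nn x2 + nn x0 * pp x2 + pp x2 * nn x3 + nn x2 * pp x3 + pp x3 * nn x4 + nn x3 * pp x4
     + pp x4 * nn x5 + nn x4 * pp x5 + pp x5 * nn x6 + nn x5 * pp x6 + pp x6 * nn x7 + nn x6 * pp x7
     + pp x1 * nn x3 + nn x1 * pp x3)
  - 2 * (pp x0 * nn x0 + pp x1 * nn x1 + pp x2 * nn x2 + pp x3 * nn x3 + pp x4 * nn x4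
         + pp x5 * nn x5 + pp x6 * nn x6 + pp x7 * nn x7).
  rewrite {1}e0 {1}e1 {1}e2 {1}e3 {1}e4 {1}e5 {1}e6 {1}e7 /P8; ring.
rewrite z0 z1 z2 z3 z4 z5 z6 z7 in D.
have c0 : 0 <= pp x0 * nn x2 + nn x0 * pp x2 + pp x2 * nn x3 + nn x2 * pp x3 + pp x3 * nn x4 + nn x3 * pp x4
     + pp x4 * nn x5 + nn x4 * pp x5 + pp x5 * nn x6 + nn x5 * pp x6 + pp x6 * nn x7 + nn x6 * pp x7
     + pp x1 * nn x3 + nn x1 * pp x3 by rewrite !addr_ge0 ?mulr_ge0.
have g1 := P8_ge0 (pp x0) (pp x1) (pp x2) (pp x3) (pp x4) (pp x5) (pp x6) (pp x7).
have g2 := P8_ge0 (nn x0) (nn x1) (nn x2) (nn x3) (nn x4) (nn x5) (nn x6) (nn x7).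
move=> E.
have [h|h] : P8 (pp x0) (pp x1) (pp x2) (pp x3) (pp x4) (pp x5) (pp x6) (pp x7) <= 0 \/
             P8 (nn x0) (nn x1) (nn x2) (nn x3) (nn x4) (nn x5) (nn x6) (nn x7) <= 0 by lia.
  apply/orP; right; move: (P8_zero h).
  move=> /andP[/eqP/pp0-> /andP[/eqP/pp0-> /andP[/eqP/pp0-> /andP[/eqP/pp0->]]]].
  by move=> /andP[/eqP/pp0-> /andP[/eqP/pp0-> /andP[/eqP/pp0-> /eqP/pp0->]]].
apply/orP; left; move: (P8_zero h).
move=> /andP[/eqP/nn0-> /andP[/eqP/nn0-> /andP[/eqP/nn0-> /andP[/eqP/nn0->]]]].
by move=> /andP[/eqP/nn0-> /andP[/eqP/nn0-> /andP[/eqP/nn0-> /eqP/nn0->]]].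
Qed.

Definition Q8 (c : 'rV[int]_8) : int := (c *m CartanE8 *m c^T) 0 0.
Definition P8v (c : 'rV[int]_8) : int :=
  P8 (c 0 o0) (c 0 o1) (c 0 o2) (c 0 o3) (c 0 o4) (c 0 o5) (c 0 o6) (c 0 o7).

Lemma Q8E c : Q8 c = 2 * P8v c.
Proof.
rewrite /Q8 /P8v /P8 !mxE sum8 !mxE !sum8 !mxE /=.
ring.
Qed.

Lemma Q8_refl c i : Q8 (c - ((c *m CartanE8) 0 i) *: delta_mx 0 i) = Q8 c.
Proof.
rewrite !Q8E /P8v; congr (_ * _); move: i; apply: ord8P; rewrite !mxE sum8 !mxE /= /P8; ring.
Qed.

Lemma rcK x : rc x *m CartanE8 = x.
Proof. by rewrite /rc -mulmxA MC mulmx1. Qed.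

Lemma rc_mulC c : rc (c *m CartanE8) = c.
Proof. by rewrite /rc -mulmxA CM mulmx1. Qed.

Lemma is_rootE b : is_root b <-> Q8 (rc b) = 2.
Proof.
split; first by case=> c [-> h]; rewrite rc_mulC.
by move=> h; exists (rc b); split; [rewrite rcK | exact: h].
Qed.

Lemma all8 (P : 'I_8 -> bool) :
  [&& P o0, P o1, P o2, P o3, P o4, P o5, P o6 & P o7] -> forall j, P j.
Proof.
move=> /andP[h0 /andP[h1 /andP[h2 /andP[h3 /andP[h4 /andP[h5 /andP[h6 h7]]]]]]].
exact: (@ord8P (fun j => is_true (P j))).
Qed.

Lemma root_sign b : is_root b -> (forall j, 0 <= rc b 0 j) \/ (forall j, rc b 0 j <= 0).
Proof.
move/is_rootE; rewrite Q8E => h.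
have : P8v (rc b) = 1 by lia.
rewrite /P8v => /P8_sign /orP[h1|h1]; [left|right]; exact: (all8 (P := fun j => _) h1).
Qed.

Lemma salpha_ii i : salpha i 0 i = 2.
Proof. by rewrite /salpha !mxE eqxx. Qed.

Lemma refl_invol i x : refl i (refl i x) = x.
Proof.
have e : refl i x 0 i = - x 0 i.
  rewrite /refl !mxE eqxx; ring.
by rewrite {1}/refl e scaleNr opprK /refl subrK.
Qed.

Lemma rc_sub a b : rc (a - b) = rc a - rc b.
Proof. by rewrite /rc mulmxBl. Qed.

Lemma rc_refl i x : rc (refl i x) = rc x - (x 0 i) *: delta_mx 0 i.
Proof. by rewrite /refl rc_sub rc_scale rc_salpha. Qed.

Lemma root_refl i b : is_root b -> is_root (refl i b).
Proof.
rewrite !is_rootE rc_refl => h; rewrite -{2}(rcK b) Q8_refl //.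
Qed.

Lemma salpha_root i : is_root (salpha i).
Proof.
apply/is_rootE; rewrite rc_salpha Q8E /P8v; move: i; apply: ord8P; rewrite !mxE /= /P8; ring.
Qed.

Lemma P8v_delta i (m : int) : P8v (m *: delta_mx 0 i) = m * m.
Proof. rewrite /P8v; move: i; apply: ord8P; rewrite !mxE /= /P8; ring. Qed.

Lemma root_mult i b : is_root b -> (forall j, j != i -> rc b 0 j = 0) ->
  rc b 0 i = 1 \/ rc b 0 i = -1.
Proof.
move=> /is_rootE; rewrite Q8E; move: (rc b) => c hq hz.
have E : c = (c 0 i) *: delta_mx 0 i.
  apply/matrixP => a j; rewrite (ord1 a) [RHS]mxE [X in _ * X]mxE eqxx /=.
  have [->|ne] := eqVneq j i; first by rewrite mulr1.
  by rewrite hz // mulr0.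
move: hq; rewrite E P8v_delta -E; nia.
Qed.

Definition posr (b : wt) : bool := [forall j, 0 <= rc b 0 j].

Lemma rc_eq a b : rc a = rc b -> a = b.
Proof. by move=> h; rewrite -(rcK a) h rcK. Qed.

Lemma rc_refl_off i j x : j != i -> rc (refl i x) 0 j = rc x 0 j.
Proof.
move=> ji; rewrite rc_refl; move: (rc x) (x 0 i) => c m.
by rewrite !mxE (negbTE ji) /= mulr0 subr0.
Qed.

Lemma rc_refl_on i x : rc (refl i x) 0 i = rc x 0 i - x 0 i.
Proof.
rewrite rc_refl; move: (rc x) (x 0 i) => c m.
by rewrite !mxE !eqxx /= mulr1.
Qed.

Section Roots.
Variable rts : seq wt.
Hypothesis Hrts_uniq : uniq rts.
Hypothesis Hrts : forall beta : wt, beta \in rts <-> is_root beta.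

Lemma refl_F i b : b \in rts -> posr b -> b != salpha i ->
  [&& refl i b \in rts, posr (refl i b) & refl i b != salpha i].
Proof.
move=> bR bP bN.
have rb : is_root b by apply/Hrts.
have rrb : is_root (refl i b) by apply: root_refl.
have bP' : forall j, 0 <= rc b 0 j by move=> j; move/forallP: bP; apply.
apply/and3P; split; first by apply/Hrts.
- have /existsP[j /andP[ji cj]] : [exists j, (j != i) && (0 < rc b 0 j)].
    apply: contraT; rewrite negb_exists => /forallP hn.
    have hz : forall j, j != i -> rc b 0 j = 0.
      move=> j ji; apply/eqP; rewrite eq_le bP' andbT leNgt.
      by have := hn j; rewrite ji.
    have [h1|h1] := root_mult rb hz; last by have := bP' i; rewrite h1.
    have : rc b = rc (salpha i).
      rewrite rc_salpha; apply/matrixP => a j; rewrite (ord1 a) [RHS]mxE eqxx /=.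
      have [->|ne] := eqVneq j i; first by rewrite h1.
      by rewrite hz.
    by move/rc_eq => E; rewrite E eqxx in bN.
  case: (root_sign rrb) => [h|h]; first by apply/forallP.
  by have := h j; rewrite rc_refl_off // leNgt cj.
- apply/negP => /eqP E.
  have : b = refl i (salpha i) by rewrite -E refl_invol.
  move=> Eb; have := bP' i; rewrite Eb rc_refl_on rc_salpha salpha_ii !mxE !eqxx /=.
  by [].
Qed.

Lemma sigma_coord i : (\sum_(b <- rts | posr b) b) 0 i = 2.
Proof.
set F := [seq b <- [seq b <- rts | posr b] | b != salpha i].
have aR : salpha i \in [seq b <- rts | posr b].
  rewrite mem_filter; apply/andP; split; last by apply/Hrts; apply: salpha_root.
  by apply/forallP => j; rewrite rc_salpha !mxE eqxx /=; case: (j == i).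
have E1 : \sum_(b <- rts | posr b) b = salpha i + \sum_(b <- F) b.
  rewrite -big_filter (bigD1_seq (salpha i)) ?filter_uniq //= big_filter //.
have inF b : b \in F = [&& b \in rts, posr b & b != salpha i].
  by rewrite /F !mem_filter; case: (b \in rts) (posr b) (b != salpha i) => [] [] [].
have pF : perm_eq (map (refl i) F) F.
  apply: uniq_perm.
  - rewrite map_inj_uniq ?filter_uniq //; exact: (can_inj (refl_invol i)).
  - by rewrite !filter_uniq.
  move=> x; apply/mapP/idP => [[y yF ->]|xF].
    by rewrite inF; move: yF; rewrite inF => /and3P[h1 h2 h3]; apply: refl_F.
  exists (refl i x); last by rewrite refl_invol.
  by rewrite inF; move: xF; rewrite inF => /and3P[h1 h2 h3]; apply: refl_F.
have E2 : \sum_(b <- F) refl i b = \sum_(b <- F) b.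
  by rewrite -(big_map (refl i) xpredT id) (perm_big _ pF).
have E3 : \sum_(b <- F) refl i b = \sum_(b <- F) b - (\sum_(b <- F) b 0 i) *: salpha i.
  by rewrite /refl sumrB scaler_suml.
have E4 : (\sum_(b <- F) b 0 i) *: salpha i = 0.
  apply: oppr_inj; apply: (addrI (\sum_(b <- F) b)).
  by rewrite oppr0 addr0 -E3 E2.
have E5 : \sum_(b <- F) b 0 i = 0.
  have := congr1 (fun m : wt => m 0 i) E4; rewrite /= [LHS]mxE salpha_ii [RHS]mxE.
  by move/eqP; rewrite mulf_eq0 => /orP[/eqP|].
by rewrite E1 [LHS]mxE summxE E5 addr0 salpha_ii.
Qed.

Lemma rootsum kk : \sum_(w <- adjoint_weights rts) pp (rc w 0 kk) = \sum_(j < 8) 2 * ME8 j kk.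
Proof.
rewrite /adjoint_weights big_cat.
have -> : \sum_(w <- nseq 8 (0:wt)) pp (rc w 0 kk) = 0.
  rewrite big1_seq // => w; rewrite ?andTb mem_nseq => /andP[_ /eqP->].
  by rewrite /rc mul0mx mxE /pp lexx.
rewrite /= addr0.
transitivity (\sum_(w <- rts | posr w) rc w 0 kk).
  rewrite [RHS]big_mkcond /=; apply: eq_big_seq => w wR.
  have rw : is_root w by apply/Hrts.
  case pw : (posr w).
    have : 0 <= rc w 0 kk by move/forallP: pw; apply.
    by rewrite /pp => ->.
  case: (root_sign rw) => h.
    by move: pw; rewrite /posr; have -> : [forall j, 0 <= rc w 0 j] by apply/forallP.
  by rewrite /pp; case: ifP => // h0; apply/eqP; rewrite eq_le h0 h.
rewrite -summxE.
have -> : \sum_(w <- rts | posr w) rc w = rc (\sum_(w <- rts | posr w) w) by rewrite /rc mulmx_suml.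
rewrite /rc mxE; apply: eq_bigr => j _.
by rewrite sigma_coord.
Qed.

End Roots.

Lemma pp_ge x : x <= pp x.
Proof. by rewrite /pp; case: ifP => // /negbT; rewrite -ltNge => /ltW. Qed.
Lemma pp_ge0 x : 0 <= pp x.
Proof. by rewrite /pp; case: ifP. Qed.

Lemma rc_add a b : rc (a + b) = rc a + rc b.
Proof. by rewrite /rc mulmxDl. Qed.

Lemma elemsym_bound kk (n : nat) (ws : seq wt) p : p \in elemsym n ws ->
  rc p.1 0 kk <= \sum_(w <- ws) pp (rc w 0 kk).
Proof.
have B0 : forall ws : seq wt, 0 <= \sum_(w <- ws) pp (rc w 0 kk).
  by move=> s; apply: sumr_ge0 => w _; apply: pp_ge0.
elim: ws n p => [|w ws IH] [|n] p //=.
- by rewrite /eone /eexp mem_seq1 => /eqP-> /=; rewrite big_nil /rc mul0mx mxE.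
- by rewrite /eone /eexp mem_seq1 => /eqP-> /=; rewrite /rc mul0mx mxE B0.
rewrite /eadd mem_cat big_cons => /orP[/IH h|].
  by apply: le_trans h _; rewrite lerDr pp_ge0.
rewrite /emul /eexp /= cats0 => /mapP[q qg ->] /=.
rewrite rc_add [X in X <= _]mxE; apply: lerD; first exact: pp_ge.
exact: IH qg.
Qed.

Definition lamx (x : expo) : wt := \sum_(l <- enum 'I_8) omega l *+ x l.

Lemma lamxE x j : lamx x 0 j = (x j)%:Z.
Proof.
rewrite /lamx summxE (bigD1_seq j) ?mem_enum ?enum_uniq //= big1_seq.
  by rewrite addr0 mulmxnE !mxE eqxx natz.
by move=> l /andP[ne _]; rewrite mulmxnE !mxE eq_sym (negbTE ne) mul0rn.
Qed.

Lemma lamx_inj x y : lamx x = lamx y -> x = y.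
Proof.
move=> e; apply/ffunP => j; have := congr1 (fun m : wt => m 0 j) e.
by rewrite /= !lamxE => /eqP; rewrite eqz_nat => /eqP.
Qed.

Lemma CinvE : CinvE8 = map_mx (fun z : int => z%:~R) ME8.
Proof.
have h : map_mx (fun z : int => (z%:~R : rat)) CartanE8 *m map_mx (fun z : int => z%:~R) ME8 = 1%:M.
  by rewrite -map_mxM CM map_mx1.
have [u _] := mulmx1_unit h.
by rewrite /CinvE8 -[RHS](mulKmx u) h mulmx1.
Qed.

Lemma lew_coord kk a b : lew (Posk kk) a b -> rc a 0 kk <= rc b 0 kk.
Proof.
rewrite /lew => /orP[/eqP->//|]; rewrite /ltw /Posk /= => /orP[h|/andP[/eqP h _]];
  move: h; rewrite rc_sub; move: (rc a) (rc b) => ca cb; rewrite !mxE.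
  by rewrite subr_gt0 => /ltW.
by move/eqP; rewrite subr_eq0 => /eqP->.
Qed.

Lemma rcE x kk : rc x 0 kk = \sum_(j < 8) x 0 j * ME8 j kk.
Proof. by rewrite /rc mxE. Qed.

Unset Implicit Arguments.

Theorem lemma2p3 (chi : 'I_8 -> elt)
  (Hchi : forall l : 'I_8, irr_char (omega l) (chi l))
  (rts : seq wt) (Hrts_uniq : uniq rts)
  (Hrts : forall beta : wt, beta \in rts <-> is_root beta)
  (k : nat) (Hk : (k <= 248)%N)
  (S : seq expo) (N : expo -> int)
  (HS : uniq S) (HN : forall iota : expo, iota \notin S -> N iota = 0)
  (Hexp : eeq (elemsym k (adjoint_weights rts)) (expand chi S N)) :
  forall iota : expo, ~ admissible iota -> N iota = 0.
Proof.
move=> iota nadm; apply/eqP; apply: contraT => Nnz.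
have [kk hk] : exists kk : 'I_8, \sum_(j < 8) 2 * ME8 j kk < \sum_(j < 8) (iota j)%:Z * ME8 j kk.
  have /existsP[kk hk] : [exists kk : 'I_8, ~~ (\sum_(j < 8) (iota j)%:R * e_coef j kk <= 2 * \sum_(j < 8) e_coef j kk)].
    apply: contraT; rewrite negb_exists => /forallP h; exfalso; apply: nadm => kk.
    by have := h kk; rewrite negbK.
  exists kk; move: hk; rewrite -ltNge /e_coef CinvE.
  have e1 : 2 * \sum_(j < 8) (map_mx (fun z : int => (z%:~R : rat)) ME8) j kk = ((\sum_(j < 8) 2 * ME8 j kk)%:~R : rat).
    by rewrite big_distrr rmorph_sum; apply: eq_bigr => j _; rewrite mxE rmorphM.
  have e2 : \sum_(j < 8) (iota j)%:R * (map_mx (fun z : int => (z%:~R : rat)) ME8) j kk = ((\sum_(j < 8) (iota j)%:Z * ME8 j kk)%:~R : rat).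
    by rewrite rmorph_sum; apply: eq_bigr => j _; rewrite mxE rmorphM /= [in LHS]pmulrn.
  by rewrite e1 e2 ltr_int.
have A := @Posk_add kk; have Z := Posk0 kk; have T := @Posk_tri kk; have Al := @Posk_alpha kk.
have hchi : forall l, islead (Posk kk) (chi l) (omega l) by move=> l; apply: (irr_lead A Z T Al (Hchi l)).
have hmon : forall x, islead (Posk kk) (emonom chi x) (lamx x).
  move=> x; rewrite /emonom /lamx; apply: (islead_foldr A Z) => l.
  exact: (islead_pow A Z).
have hexp : forall mu, coef (expand chi S N) mu = \sum_(x <- S) N x * coef (emonom chi x) mu.
  by move=> mu; rewrite /expand coef_flatten big_map; apply: eq_bigr => x _; rewrite coef_escale.
have iS : iota \in S by apply: contraT => /HN h; rewrite h eqxx in Nnz.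
set Sx := [seq x <- S | N x != 0].
have iSx : iota \in Sx by rewrite mem_filter Nnz iS.
have SxN : Sx != [::] by apply/eqP => e; rewrite e in iSx.
have [y ySx ymax] := exists_max A T lamx SxN.
have yS : y \in S by move: ySx; rewrite mem_filter => /andP[].
have Ny : N y != 0 by move: ySx; rewrite mem_filter => /andP[].
have cy : coef (expand chi S N) (lamx y) = N y.
  rewrite hexp (bigD1_seq y) //= big1_seq.
    by case: (hmon y) => -> _; rewrite mulr1 addr0.
  move=> x /andP[xy xS].
  have [->|Nx] := eqVneq (N x) 0; first by rewrite mul0r.
  have xSx : x \in Sx by rewrite mem_filter Nx xS.
  have lt1 : ltw (Posk kk) (lamx x) (lamx y).
    apply: lew_ltw (ymax _ xSx) _; apply: contra xy => /eqP/lamx_inj ->; by [].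
  have [_ bx] := hmon x.
  have [->|nz] := eqVneq (coef (emonom chi x) (lamx y)) 0; first by rewrite mulr0.
  have := lew_ltw_trans A (bx _ nz) lt1.
  by rewrite (negbTE (ltw_irr Z _)).
have : coef (elemsym k (adjoint_weights rts)) (lamx y) != 0 by rewrite Hexp cy.
move/coef_nz/mapP => [p pE ep].
have b1 := elemsym_bound kk pE; rewrite -ep rootsum // in b1.
have b2 := lew_coord (ymax _ iSx).
have r x : rc (lamx x) 0 kk = \sum_(j < 8) (x j)%:Z * ME8 j kk.
  by rewrite rcE; apply: eq_bigr => j _; rewrite lamxE.
rewrite !r in b1 b2.
by have := lt_le_trans hk b2; rewrite ltNge b1.
Qed.
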